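(* Let $P$ be a finite propositional normal logic program and let $\Delta_w$ be any function assigning to each pair $(F,Q)$, where $F\subseteq \mathit{At}(P)$ and $Q$ is a Horn program with $\mathit{At}(Q)\subseteq\overline{F}$, a set $\Delta_w(F,Q)$ such that (W1) $\Delta_w(F,Q)\subseteq \overline{F}\setminus LM(Q)$, and (W2) $\Delta_w(F,Q)=\emptyset$ if and only if $\overline{F}\setminus LM(Q)=\emptyset$. Define $B_w(F)=F\cup \Delta_w(F,P_{F,T}^h)$ where $T=GL(\overline{F})$. Then for every $F$, $F\subseteq B_w(F)\subseteq B(F)$; the sequence $B_w^i(\emptyset)$, $i=0,1,2,\dots$, is contained in $F_{wfs}$ and is nondecreasing, hence there is a first $i$ with $B_w^i(\emptyset)=B_w^{i+1}(\emptyset)$; and for this $i$, $B_w^i(\emptyset)=F_{wfs}$.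
   Context: $\mathit{At}(P)$ is the set of atoms occurring in $P$ (and $\mathit{At}(Q)$ those in $Q$); for $X\subseteq \mathit{At}(P)$, $\overline{X}=\mathit{At}(P)\setminus X$. $LM(Q)$ is the least model of a Horn program $Q$. For $M\subseteq\mathit{At}(P)$, $P_M$ is obtained from $P$ by removing all rules whose bodies contain $\mathbf{not}(a)$ with $a\in M$; $P^h$ is obtained by deleting all negative literals from rule bodies; $GL(M)=LM((P_M)^h)$. $T_{wfs}=\mathrm{lfp}(GL\circ GL)$, $F_{wfs}=\overline{GL(T_{wfs})}$. For $F,T\subseteq\mathit{At}(P)$, $P_{F,T}$ is obtained from $P$ by removing all rules with head in $F$, all rules whose body contains a positive occurrence of an atom of $F$, and all rules whose body contains $\mathbf{not}(a)$ with $a\in T$; $P_{F,T}^h=(P_{F,T})^h$ (note $\mathit{At}(P_{F,T}^h)\subseteq\overline F$). $B(F)=\overline{LM(P_{F,T}^h)}$ with $T=GL(\overline F)$. $B_w^i$ denotes the $i$-fold iterate of $B_w$. *)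

(* Defs.v *)
From mathcomp Require Import all_boot.
Set Implicit Arguments. Unset Strict Implicit. Unset Printing Implicit Defensive.

Section LP.
Variable T : finType.

Record rule := Rule { head : T; pos : seq T; neg : seq T }.
Definition program := seq rule.

Definition At (P : program) : {set T} :=
  [set a | has (fun r => (a == head r) || (a \in pos r) || (a \in neg r)) P].

Definition horn (Q : program) : bool := all (fun r => neg r == [::]) Q.

Definition model (Q : program) (M : {set T}) : bool :=
  all (fun r => all (fun a => a \in M) (pos r) ==> (head r \in M)) Q.

Definition LM (Q : program) : {set T} := \bigcap_(M | model Q M) M.

Definition hpart (P : program) : program :=
  map (fun r => Rule (head r) (pos r) [::]) P.

Definition reductM (P : program) (M : {set T}) : program :=
  filter (fun r => ~~ has (fun a => a \in M) (neg r)) P.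

Definition GL (P : program) (M : {set T}) : {set T} := LM (hpart (reductM P M)).

Definition lfp (f : {set T} -> {set T}) : {set T} := \bigcap_(X | f X \subset X) X.

Definition Twfs (P : program) : {set T} := lfp (fun X => GL P (GL P X)).
Definition Fwfs (P : program) : {set T} := At P :\: GL P (Twfs P).

Definition PFT (P : program) (F Tt : {set T}) : program :=
  filter (fun r => [&& head r \notin F,
                       ~~ has (fun a => a \in F) (pos r) &
                       ~~ has (fun a => a \in Tt) (neg r)]) P.

Definition B (P : program) (F : {set T}) : {set T} :=
  At P :\: LM (hpart (PFT P F (GL P (At P :\: F)))).

Definition Bw (P : program) (Dw : {set T} -> program -> {set T}) (F : {set T}) : {set T} :=
  F :|: Dw F (hpart (PFT P F (GL P (At P :\: F)))).

End LP.

(* Main.v *)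
From HB Require Import structures.
Require Import Defs.
From mathcomp Require Import all_boot.
Import Defs.

Definition r2p (T : finType) (r : rule T) := (head r, pos r, neg r).
Definition p2r (T : finType) (x : T * seq T * seq T) := Rule x.1.1 x.1.2 x.2.
Lemma r2pK (T : finType) : cancel (@r2p T) (@p2r T). Proof. by case. Qed.
HB.instance Definition _ (T : finType) := Equality.copy (rule T) (can_type (@r2pK T)).

Section Aux.
Variable T : finType.
Implicit Types (P Q : program T) (M X Y F : {set T}).

Lemma modelP Q M : reflect (forall r, r \in Q -> {subset pos r <= M} -> head r \in M)
  (model Q M).
Proof.
apply: (iffP allP) => H r rQ.
  by move=> s; move/implyP: (H r rQ); apply; apply/allP.
by apply/implyP => /allP s; apply: H.
Qed.

Lemma LM_min Q M : model Q M -> LM Q \subset M.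
Proof. by move=> h; rewrite /LM; exact: (@bigcap_inf _ _ M (fun M => model Q M)). Qed.

Lemma LM_model Q : model Q (LM Q).
Proof.
apply/modelP => r rQ s; apply/bigcapP => M mM.
apply: (modelP _ _ mM r rQ) => a /s /bigcapP; apply; exact: mM.
Qed.

Lemma LM_mono Q1 Q2 : {subset Q1 <= Q2} -> LM Q1 \subset LM Q2.
Proof.
move=> H; apply: LM_min; apply/modelP => r r1 s.
exact: (modelP _ _ (LM_model Q2) r (H r r1) s).
Qed.

Lemma LM_At Q : LM Q \subset At Q.
Proof.
apply: LM_min; apply/modelP => r rQ _; rewrite inE; apply/hasP; exists r => //.
by rewrite eqxx.
Qed.

Lemma GL_anti P X Y : X \subset Y -> GL P Y \subset GL P X.
Proof.
move=> XY; apply: LM_mono => r /mapP [r' r'in ->]; apply/mapP; exists r' => //.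
move: r'in; rewrite !mem_filter => /andP [h ->]; rewrite andbT.
apply: contra h => /hasP [a aN aX]; apply/hasP; exists a => //.
exact: (subsetP XY).
Qed.

Lemma GL_At P X : GL P X \subset At P.
Proof.
apply: LM_min; apply/modelP => r /mapP [r' r'in ->] _ /=.
move: r'in; rewrite mem_filter => /andP [_ r'P].
rewrite inE; apply/hasP; exists r' => //; by rewrite eqxx.
Qed.

Lemma Twfs_pre P : GL P (GL P (Twfs P)) \subset Twfs P.
Proof.
apply/bigcapsP => X HX; have HX2 := HX; apply: subset_trans HX2.
apply: GL_anti; apply: GL_anti.
rewrite /Twfs /lfp; exact: (@bigcap_inf _ _ X (fun X => GL P (GL P X) \subset X) _ HX).
Qed.

Lemma Twfs_least P X : GL P (GL P X) \subset X -> Twfs P \subset X.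
Proof. by move=> h; rewrite /Twfs /lfp; exact: (@bigcap_inf _ _ X (fun X => GL P (GL P X) \subset X)). Qed.

Lemma horn_hpart Q : horn (hpart Q).
Proof. by rewrite /horn all_map; apply/allP. Qed.

Lemma At_PFT P F Tt : At (hpart (PFT P F Tt)) \subset At P :\: F.
Proof.
apply/subsetP => a; rewrite inE => /hasP [r /mapP [r' r'in ->]] /=.
move: r'in; rewrite mem_filter => /andP [/and3P [hF pF _] r'P] ha.
rewrite in_setD; apply/andP; split.
  case/orP: ha => [/orP [/eqP -> // | ap] | //].
  by apply/negP => aF; move/negP: pF; apply; apply/hasP; exists a.
rewrite inE; apply/hasP; exists r' => //; by rewrite in_nil orbF in ha; rewrite ha.
Qed.

Lemma sound P F : F \subset Fwfs P -> B P F \subset Fwfs P.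
Proof.
move=> FF; rewrite /B /Fwfs; apply: setDS.
set U := GL P (Twfs P).
set Tt := GL P (At P :\: F).
have UF : U \subset At P :\: F.
  apply/subsetP => x xU; rewrite in_setD (subsetP (GL_At _ _) _ xU) andbT.
  apply/negP => xF; move: (subsetP FF x xF); rewrite in_setD xU //.
have TT : Tt \subset Twfs P by apply: subset_trans (Twfs_pre P); apply: GL_anti.
have : U \subset U :&: LM (hpart (PFT P F Tt)).
  apply: LM_min; apply/modelP => r /mapP [r' r'in ->] /= s.
  have hU : head r' \in U.
    apply: (modelP _ _ (LM_model _) (Rule (head r') (pos r') [::])) => //=.
      by apply/mapP; exists r'.
    by move=> a /s; rewrite inE => /andP [].
  rewrite inE hU /=.
  apply: (modelP _ _ (LM_model _) (Rule (head r') (pos r') [::])) => /=; last first.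
    by move=> a /s; rewrite inE => /andP [].
  apply/mapP; exists r' => //.
  move: r'in; rewrite !mem_filter => /andP [nT ->]; rewrite andbT.
  apply/and3P; split.
  - by move: (subsetP UF _ hU); rewrite in_setD => /andP [].
  - apply/hasP => [[a ap aF]]; move: (s a ap); rewrite inE => /andP [aU _].
    by move: (subsetP UF _ aU); rewrite in_setD aF.
  - apply: contra nT => /hasP [a an aT]; apply/hasP; exists a => //.
    exact: (subsetP TT).
by move=> h; apply: subset_trans h _; apply: subsetIr.
Qed.

Lemma complete P F :
  (At P :\: F) :\: LM (hpart (PFT P F (GL P (At P :\: F)))) = set0 ->
  Fwfs P \subset F.
Proof.
set G := At P :\: F => /eqP; rewrite setD_eq0 => GQ.
have GG : G \subset GL P (GL P G).
  apply: subset_trans GQ _; apply: LM_mono => r /mapP [r' r'in ->].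
  apply/mapP; exists r' => //; move: r'in; rewrite !mem_filter.
  by case/andP => /and3P [_ _ ->] ->.
have TG : Twfs P \subset GL P G by apply: Twfs_least; apply: GL_anti.
have GU : G \subset GL P (Twfs P) by apply: subset_trans GG _; apply: GL_anti.
apply/subsetP => x; rewrite /Fwfs in_setD => /andP [xU xA].
apply/negPn/negP => xF; move/negP: xU; apply; apply: (subsetP GU).
by rewrite in_setD xF xA.
Qed.

End Aux.
Arguments horn_hpart {T}. Arguments At_PFT {T}. Arguments LM_At {T}. Arguments sound {T P F}. Arguments complete {T P F}.

Theorem mainTheorem3 (T : finType) (P : program T)
  (Dw : {set T} -> program T -> {set T})
  (W1 : forall (F : {set T}) (Q : program T),
      F \subset At P -> horn Q -> At Q \subset At P :\: F ->
      Dw F Q \subset (At P :\: F) :\: LM Q)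
  (W2 : forall (F : {set T}) (Q : program T),
      F \subset At P -> horn Q -> At Q \subset At P :\: F ->
      (Dw F Q = set0 <-> (At P :\: F) :\: LM Q = set0)) :
  (forall F : {set T}, F \subset At P ->
      F \subset Bw P Dw F /\ Bw P Dw F \subset B P F) /\
  (forall i : nat, iter i (Bw P Dw) set0 \subset Fwfs P) /\
  (forall i : nat, iter i (Bw P Dw) set0 \subset iter i.+1 (Bw P Dw) set0) /\
  (exists i : nat,
      iter i (Bw P Dw) set0 = iter i.+1 (Bw P Dw) set0 /\
      (forall j : nat, j < i -> iter j (Bw P Dw) set0 <> iter j.+1 (Bw P Dw) set0) /\
      iter i (Bw P Dw) set0 = Fwfs P).
Proof.
have P1 : forall F : {set T}, F \subset At P ->
      F \subset Bw P Dw F /\ Bw P Dw F \subset B P F.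
  move=> F FA; split; first exact: subsetUl.
  have W := W1 F _ FA (horn_hpart _) (At_PFT P F (GL P (At P :\: F))).
  apply/subsetP => x; rewrite in_setU => /orP [xF | xD].
    rewrite /B in_setD (subsetP FA _ xF) andbT; apply/negP => xL.
    by move: (subsetP (subset_trans (LM_At _) (At_PFT _ _ _)) _ xL); rewrite in_setD xF.
  by move: (subsetP W _ xD); rewrite /B !in_setD => /andP [-> /andP [_ ->]].
have FwA : Fwfs P \subset At P by apply: subsetDl.
have P2 : forall i : nat, iter i (Bw P Dw) set0 \subset Fwfs P.
  elim => [|i IH] /=; first exact: sub0set.
  apply: subset_trans (sound IH).
  by case: (P1 _ (subset_trans IH FwA)).
have P3 : forall i : nat, iter i (Bw P Dw) set0 \subset iter i.+1 (Bw P Dw) set0.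
  by move=> i; exact: subsetUl.
split => //; split => //; split => //.
set s := fun i => iter i (Bw P Dw) set0.
have ex : exists i, s i == s i.+1.
  have card : forall n, (forall j, j < n -> s j != s j.+1) -> n <= #|s n|.
    elim => [//|n IH] H.
    have : s n \proper s n.+1 by rewrite properEneq H // P3.
    move/proper_card; apply: leq_ltn_trans; apply: IH => j jn.
    by apply: H; apply: ltnW.
  case: (boolP [exists j : 'I_(#|T|.+1), s j == s j.+1]).
    by case/existsP => j; exists j.
  move=> /existsPn H; exfalso.
  have := card #|T|.+1 (fun j jn => H (Ordinal jn)).
  by rewrite ltnNge max_card.
case: (ex_minnP ex) => i /eqP Ei Hmin.
exists i; split => //; split.
  by move=> j ji Ej; move: (Hmin j (introT eqP Ej)); rewrite leqNgt ji.
apply/eqP; rewrite eqEsubset P2 /=; apply: complete.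
set F := s i.
have FA : F \subset At P by apply: subset_trans (P2 i) FwA.
apply/(W2 F _ FA (horn_hpart _) (At_PFT P F _)).
have W := W1 F _ FA (horn_hpart _) (At_PFT P F (GL P (At P :\: F))).
apply/eqP; rewrite -subset0; apply/subsetP => x xD.
have xF : x \in F by rewrite /F Ei /= /Bw in_setU xD orbT.
by move: (subsetP W _ xD); rewrite !in_setD xF andbF.
Qed.
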